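(* Let $G$ and $H$ be connected graphs of order at least two. Then $O_{\rm SR}(G\,\square\,H)\in\{\mathcal{M},\mathcal{B}\}$. Moreover, $O_{\rm SR}(G\,\square\,H)=\mathcal{M}$ if and only if $G_{\rm SR}\cong aK_2$ and $H_{\rm SR}\cong bK_2$ for some positive integers $a,b$.
   Context: All graphs are finite, simple and undirected; $d(x,y)$ is the shortest-path distance; $aK_2$ is the disjoint union of $a$ copies of $K_2$. The Cartesian product $G\,\square\,H$ has vertex set $V(G)\times V(H)$, with $(u,w)$ adjacent to $(u',w')$ iff either $u=u'$ and $ww'\in E(H)$, or $w=w'$ and $uu'\in E(G)$. A set $S\subseteq V(X)$ is a strong resolving set of a connected graph $X$ if for all distinct $x,y\in V(X)$ there exists $z\in S$ such that $x$ lies on a $y$–$z$ geodesic or $y$ lies on an $x$–$z$ geodesic. A vertex $u$ is maximally distant from $v$ if $d(u,v)\ge d(w,v)$ for every neighbor $w$ of $u$; $u,v$ are mutually maximally distant (MMD) if each is maximally distant from the other. The strong resolving graph $X_{\rm SR}$ has vertex set $\{x: x\text{ is MMD with some }y\}$ and edges exactly the MMD pairs. The Maker–Breaker strong resolving game on $X$: Maker and Breaker alternately select a not-yet-chosen vertex of $X$; Maker wins if the vertices he selects contain a strong resolving set of $X$, Breaker wins otherwise. In the M-game Maker moves first, in the B-game Breaker moves first. $O_{\rm SR}(X)=\mathcal{M}$ if Maker has a winning strategy in both games, $\mathcal{B}$ if Breaker has a winning strategy in both, and $\mathcal{N}$ if the first player has a winning strategy in each. *)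

(* Defs.v *)
From mathcomp Require Import all_boot.
Set Implicit Arguments. Unset Strict Implicit. Unset Printing Implicit Defensive.

Section Graphs.
Variable T : finType.
Variable e : rel T.

Definition simple_graph := irreflexive e /\ symmetric e.
Definition connected_graph := forall x y : T, connect e x y.

Fixpoint reach (n : nat) (x : T) : {set T} :=
  match n with
  | 0 => [set x]
  | n'.+1 => reach n' x :|: [set y | [exists z in reach n' x, e z y]]
  end.

(* shortest-path distance (= #|T| if y unreachable from x; irrelevant
   for connected graphs, where d(x,y) <= #|T| - 1) *)
Definition dist (x y : T) : nat := find (fun n => y \in reach n x) (iota 0 #|T|).

Definition on_geodesic (x y z : T) : Prop :=
  exists p : seq T, [/\ path e y p, last y p = z, size p = dist y z & x \in y :: p].

Definition strong_resolving (S : {set T}) : Prop :=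
  forall x y : T, x != y ->
    exists2 z, z \in S & (on_geodesic x y z \/ on_geodesic y x z).

Definition max_distant (u v : T) : bool :=
  [forall w, e u w ==> (dist w v <= dist u v)].
Definition mmd (u v : T) : bool := max_distant u v && max_distant v u.

Definition sr_edge (u v : T) : bool := (u != v) && mmd u v.
Definition sr_vertices : {set T} := [set x | [exists y, sr_edge x y]].
Definition sr_vtype := {x : T | x \in sr_vertices}.

(* Maker--Breaker strong resolving game, played to completion.
   mwin n M B t : Maker (having chosen M) wins from the position where
   Breaker has chosen B, t = (Maker to move). *)
Definition maker_terminal (M : {set T}) : Prop :=
  exists S : {set T}, S \subset M /\ strong_resolving S.

Fixpoint mwin (n : nat) (M B : {set T}) (t : bool) : Prop :=
  match n with
  | 0 => maker_terminal M
  | n'.+1 =>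
    if [set: T] \subset M :|: B then maker_terminal M
    else if t then exists2 v, v \notin M :|: B & mwin n' (v |: M) B false
    else forall v, v \notin M :|: B -> mwin n' M (v |: B) true
  end.

Definition maker_wins_Mgame : Prop := mwin #|T| set0 set0 true.
Definition maker_wins_Bgame : Prop := mwin #|T| set0 set0 false.

End Graphs.

(* aK_2 on vertex set 'I_a * bool *)
Definition aK2_edge (a : nat) : rel ('I_a * bool) :=
  fun x y => (x.1 == y.1) && (x.2 != y.2).

Definition sr_iso_aK2 (T : finType) (e : rel T) (a : nat) : Prop :=
  exists f : sr_vtype e -> ('I_a * bool)%type,
    bijective f /\ forall x y : sr_vtype e, sr_edge e (val x) (val y) = aK2_edge (f x) (f y).

Definition cart_prod (T1 T2 : finType) (g : rel T1) (h : rel T2) : rel (T1 * T2) :=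
  fun x y => ((x.1 == y.1) && h x.2 y.2) || ((x.2 == y.2) && g x.1 y.1).

Inductive outcome := OutM | OutB | OutN.

(* O_SR(X) = o.  Breaker has a winning strategy in a game iff Maker has
   none (finite game of perfect information, determinacy). *)
Definition O_SR_is (T : finType) (e : rel T) (o : outcome) : Prop :=
  match o with
  | OutM => maker_wins_Mgame e /\ maker_wins_Bgame e
  | OutB => ~ maker_wins_Mgame e /\ ~ maker_wins_Bgame e
  | OutN => maker_wins_Mgame e /\ ~ maker_wins_Bgame e
  end.

(* Main.v *)
Require Import Defs.
From mathcomp Require Import all_boot.
From mathcomp Require Import zify.
Set Implicit Arguments. Unset Strict Implicit. Unset Printing Implicit Defensive.

Section Dist.
Variable T : finType.
Variable e : rel T.
Hypothesis esym : symmetric e.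
Hypothesis econn : connected_graph e.

Lemma reach_path n x y : y \in reach e n x <->
  exists p, [/\ path e x p, last x p = y & size p <= n].
Proof.
elim: n y => [|n IH] y /=.
  rewrite in_set1; split.
    by move/eqP->; exists [::].
  by case=> -[|z p] [_ /= <-] //.
rewrite in_setU in_set; split.
  case/orP.
    by case/IH=> p [P1 P2 P3]; exists p; split=> //; rewrite ltnW // ltnS.
  case/existsP=> z /andP[/IH [p [P1 P2 P3]] ezy].
  exists (rcons p y); rewrite rcons_path last_rcons size_rcons P1 P2 ezy.
  by split.
case=> p [P1 P2 P3].
case: (leqP (size p) n) => Hs.
  by apply/orP; left; apply/IH; exists p.
have Hsz : size p = n.+1 by apply/eqP; rewrite eqn_leq P3 Hs.
move: P1 P2 Hsz; clear P3 Hs; case/lastP: p => [|q z] //.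
rewrite rcons_path last_rcons size_rcons => /andP[Pq ez] Ez [Hq].
apply/orP; right; apply/existsP; exists (last x q).
by rewrite -Ez ez andbT; apply/IH; exists q; rewrite Hq.
Qed.

Lemma reach_mono m n x y : m <= n -> y \in reach e m x -> y \in reach e n x.
Proof.
move=> mn /reach_path [p [P1 P2 P3]]; apply/reach_path; exists p; split=> //.
exact: leq_trans mn.
Qed.

Lemma conn_reach x y : y \in reach e #|T|.-1 x.
Proof.
have /connectP [p P1 P2] := econn x y.
move: P2; case: (shortenP P1) => p' P1' U _ P2.
apply/reach_path; exists p'; split=> //.
have := card_uniqP U; rewrite /= => Hc.
have := max_card (mem (x :: p')); rewrite Hc /=.
by case: #|T|.
Qed.

Lemma dist_le x y n : (dist e x y <= n) = (y \in reach e n x).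
Proof.
rewrite /dist.
set P := fun n => y \in reach e n x.
have N0 : 0 < #|T| by apply/card_gt0P; exists x.
have hasP : has P (iota 0 #|T|).
  apply/hasP; exists #|T|.-1; last exact: conn_reach.
  by rewrite mem_iota add0n prednK // leqnn andbT.
have k_lt : find P (iota 0 #|T|) < #|T| by rewrite -{2}(size_iota 0 #|T|) -has_find.
have Pk := nth_find 0 hasP.
rewrite nth_iota // add0n in Pk.
apply/idP/idP => H.
  exact: reach_mono H Pk.
rewrite leqNgt; apply/negP => Hlt.
have := before_find 0 Hlt; rewrite nth_iota ?add0n ?(ltn_trans Hlt) //.
by rewrite /P H.
Qed.

Lemma dist_path x p : path e x p -> dist e x (last x p) <= size p.
Proof. by move=> P; rewrite dist_le; apply/reach_path; exists p. Qed.

Lemma dist_geo x y : exists p, [/\ path e x p, last x p = y & size p = dist e x y].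
Proof.
have := leqnn (dist e x y); rewrite dist_le => /reach_path [p [P1 P2 P3]].
exists p; split=> //; apply/eqP; rewrite eqn_leq P3 -{1}P2.
exact: dist_path.
Qed.

Lemma dist_tri x y z : dist e x z <= dist e x y + dist e y z.
Proof.
have [p [P1 P2 P3]] := dist_geo x y.
have [q [Q1 Q2 Q3]] := dist_geo y z.
have := @dist_path x (p ++ q).
rewrite cat_path P1 P2 Q1 last_cat P2 Q2 size_cat P3 Q3.
by apply.
Qed.

Lemma rev_last (x : T) p : last (last x p) (rev (belast x p)) = x.
Proof. by case: p => [|y q] //; rewrite [belast _ _]/= rev_cons last_rcons. Qed.

Lemma dist_sym x y : dist e x y = dist e y x.
Proof.
suff H : forall a b, dist e a b <= dist e b a.
  by apply/eqP; rewrite eqn_leq !H.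
move=> a b.
have [p [P1 P2 P3]] := dist_geo b a.
have : path e (last b p) (rev (belast b p)).
  by rewrite rev_path (eq_path (e' := e)) // => u v; rewrite esym.
move/dist_path; rewrite rev_last size_rev size_belast P2 P3; exact.
Qed.

Lemma dist0 x : dist e x x = 0.
Proof. by apply/eqP; rewrite -leqn0 dist_le /= in_set1. Qed.

Lemma dist_eq0 x y : dist e x y = 0 -> x = y.
Proof. by move=> H; have := leqnn 0; rewrite -{1}H dist_le /= in_set1 => /eqP. Qed.

Lemma dist_adj x y : e x y -> dist e x y <= 1.
Proof. by move=> H; have := @dist_path x [:: y]; rewrite /= H; apply. Qed.

Lemma dist_nb u w v : e u w -> dist e w v <= (dist e u v).+1.
Proof.
move=> H; apply: leq_trans (dist_tri w u v) _.
by rewrite dist_sym -add1n leq_add2r dist_adj.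
Qed.

Lemma geoP x y z : on_geodesic e x y z <-> dist e y x + dist e x z = dist e y z.
Proof.
split.
  case=> p [P1 P2 P3 P4].
  case/splitPl: P4 P1 P2 P3 => p1 p2 L.
  rewrite cat_path last_cat size_cat -L => /andP[Q1 Q2] L2 S.
  apply/eqP; rewrite eqn_leq dist_tri andbT -S.
  apply: leq_add; first exact: dist_path.
  by rewrite -L2; exact: dist_path.
move=> H.
have [p [P1 P2 P3]] := dist_geo y x.
have [q [Q1 Q2 Q3]] := dist_geo x z.
exists (p ++ q); split.
- by rewrite cat_path P1 P2 Q1.
- by rewrite last_cat P2 Q2.
- by rewrite size_cat P3 Q3.
- rewrite -cat_cons mem_cat; apply/orP; left.
  by rewrite -P2 mem_last.
Qed.

Local Notation d := (dist e).


Lemma md_geo u v z : max_distant e u v -> on_geodesic e u v z -> z = u.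
Proof.
move=> md /geoP H; case: (eqVneq z u) => // zu; exfalso.
have [p [P1 P2 P3]] := dist_geo u z.
case: p P1 P2 P3 => [|w q] /=.
  by move=> _ L _; rewrite L eqxx in zu.
move=> /andP[euw Pq] L S.
have Dwz : d w z <= size q by rewrite -L; exact: dist_path.
have T1 := dist_tri v w z.
have := forallP md w; rewrite euw /= => M.
rewrite (dist_sym w v) (dist_sym u v) in M.
lia.
Qed.

Lemma sr_res_cover (S : {set T}) : strong_resolving e S ->
  forall u v, sr_edge e u v -> u \in S \/ v \in S.
Proof.
move=> SR u v /andP[uv /andP[mu mv]].
case: (boolP (u \in S)) => uS; first by left.
case: (boolP (v \in S)) => vS; first by right.
exfalso; have [z zS [G|G]] := SR u v uv.
  by move: (md_geo mu G) zS => ->; rewrite (negbTE uS).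
by move: (md_geo mv G) zS => ->; rewrite (negbTE vS).
Qed.

Lemma argmax_core a b u w :
  d a b + d b u = d a u ->
  (forall w, d a b + d b w == d a w -> d a w <= d a u) ->
  e u w -> d a w <= d a u.
Proof.
move=> Pu Mx euw; rewrite leqNgt; apply/negP => Hlt.
have N1 := dist_nb a euw.
have N2 := dist_nb b euw.
have T1 := dist_tri a b w.
rewrite (dist_sym w a) (dist_sym u a) in N1.
rewrite (dist_sym w b) (dist_sym u b) in N2.
have : d a b + d b w == d a w by apply/eqP; lia.
by move/Mx; lia.
Qed.

Lemma sr_cover_res (S : {set T}) : (forall u v, sr_edge e u v -> u \in S \/ v \in S) ->
  strong_resolving e S.
Proof.
move=> C x y xy.
have ds := dist_sym.
have dt := dist_tri.
pose P w := d x y + d y w == d x w.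
have Py : P y by rewrite /P dist0 addn0.
case: (@arg_maxnP _ y P (d x) Py) => u /eqP Pu umax.
pose Q w := d u x + d x w == d u w.
have Qx : Q x by rewrite /Q dist0 addn0.
case: (@arg_maxnP _ x Q (d u) Qx) => v /eqP Qv vmax.
have core := argmax_core Pu umax.
have mux : max_distant e u x.
  apply/forallP => w; apply/implyP => euw.
  by rewrite (ds w x) (ds u x) core.
have mvu : max_distant e v u.
  apply/forallP => w; apply/implyP => evw.
  by rewrite (ds w u) (ds v u) (argmax_core Qv vmax evw).
have muv : max_distant e u v.
  apply/forallP => w; apply/implyP => euw.
  have := core w euw.
  have := dt v x w.
  rewrite (ds w v) (ds v x).
  move: Qv; rewrite (ds u x) => Qv.
  lia.
have dxy : 0 < d x y.
  rewrite lt0n; apply/negP => /eqP /(dist_eq0) E.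
  by rewrite E eqxx in xy.
have uv : u != v.
  apply/negP => /eqP E; move: Qv; rewrite -E dist0.
  move: Pu; rewrite (ds u x); lia.
case: (C u v); first by rewrite /sr_edge uv /mmd muv mvu.
  move=> uS; exists u => //; right; apply/geoP; exact: Pu.
move=> vS; exists v => //; left; apply/geoP.
have := dt u y v; have := dt y x v.
rewrite (ds u y) (ds y x).
move: Qv Pu; rewrite (ds u x) => Qv Pu.
lia.
Qed.

End Dist.

Section Game.
Variable T : finType.
Variable e : rel T.
Hypothesis Hres : forall M : {set T}, maker_terminal e M ->
  forall u v, sr_edge e u v -> u \in M \/ v \in M.
Hypothesis Hcov : forall M : {set T},
  (forall u v, sr_edge e u v -> u \in M \/ v \in M) -> maker_terminal e M.

Lemma sr_sym u v : sr_edge e u v = sr_edge e v u.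
Proof. by rewrite /sr_edge /mmd eq_sym [max_distant e u v && _]andbC. Qed.

Lemma sr_neq u v : sr_edge e u v -> u != v.
Proof. by case/andP. Qed.

Lemma noncover (M : {set T}) a b : sr_edge e a b -> a \notin M -> b \notin M ->
  ~ maker_terminal e M.
Proof.
move=> ab aM bM /Hres /(_ _ _ ab); rewrite (negbTE aM) (negbTE bM); by case.
Qed.

Lemma free_neq (M B : {set T}) x u : x \notin M :|: B -> u \in B -> x != u.
Proof. by move=> xf uB; apply/negP => /eqP E; move: xf; rewrite E in_setU uB orbT. Qed.

Lemma bwin_edge u v : sr_edge e u v -> forall n (M B : {set T}) t,
  u \in B -> v \in B -> u \notin M -> v \notin M -> ~ mwin e n M B t.
Proof.
move=> uv; elim=> [|n IH] M B t uB vB uM vM /=.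
  exact: noncover uv uM vM.
case: ifP => full; first exact: noncover uv uM vM.
case: t.
  case=> x xf W; apply: (IH _ _ _ uB vB _ _ W).
    by rewrite in_setU1 negb_or uM andbT eq_sym (free_neq xf uB).
  by rewrite in_setU1 negb_or vM andbT eq_sym (free_neq xf vB).
move=> W; have [x _ xf] := subsetPn (negbT full).
apply: (IH M (x |: B) true _ _ uM vM (W x xf)); by rewrite in_setU1 ?uB ?vB orbT.
Qed.

Lemma bwin_cherry c l1 l2 : sr_edge e c l1 -> sr_edge e c l2 -> l1 != l2 ->
  forall n (M B : {set T}), c \in B -> c \notin M -> l1 \notin M :|: B -> l2 \notin M :|: B ->
  ~ mwin e n M B true.
Proof.
move=> e1 e2 l12 [|n] M B cB cM f1 f2 /=.
  by apply: noncover e1 cM _; move: f1; rewrite in_setU negb_or => /andP[].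
have l1M : l1 \notin M by move: f1; rewrite in_setU negb_or => /andP[].
case: ifP => full; first exact: noncover e1 cM l1M.
case=> x xf W.
have [l [el lf lx]] : exists l, [/\ sr_edge e c l, l \notin M :|: B & l != x].
  case: (eqVneq x l1) => [E|ne].
    by exists l2; split=> //; rewrite E eq_sym.
  by exists l1; split=> //; rewrite eq_sym.
have lM : l \notin M by move: lf; rewrite in_setU negb_or => /andP[].
have cx : c \notin x |: M by rewrite in_setU1 negb_or cM andbT eq_sym (free_neq xf cB).
have lxM : l \notin x |: M by rewrite in_setU1 negb_or lM andbT.
move: W; case: n => [|n] /=.
  exact: noncover el cx lxM.
case: ifP => full'; first exact: noncover el cx lxM.
move=> W; apply: (bwin_edge el (n:=n) (M:=x|:M) (B:=l|:B) (t:=true) _ _ cx lxM).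
- by rewrite in_setU1 cB orbT.
- by rewrite in_setU1 eqxx.
- apply: W; by rewrite in_setU negb_or lxM /=; move: lf; rewrite in_setU negb_or => /andP[].
Qed.

Lemma bwin_after c l1 l2 x : sr_edge e c l1 -> sr_edge e c l2 -> l1 != l2 ->
  x \notin [:: c; l1; l2] -> forall n, ~ mwin e n [set x] set0 false.
Proof.
move=> e1 e2 l12; rewrite !inE !negb_or => /and3P[xc xl1 xl2] [|n] /=.
  by apply: noncover e1 _ _; rewrite in_set1 eq_sym.
case: ifP => full; first by apply: noncover e1 _ _; rewrite in_set1 eq_sym.
move=> W.
have cf : c \notin [set x] :|: set0 by rewrite setU0 in_set1 eq_sym.
have cl1 := sr_neq e1; have cl2 := sr_neq e2.
move: (W c cf); apply: (bwin_cherry e1 e2 l12);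
  rewrite !inE ?eqxx //= ?orbF ?negb_or;
  rewrite ?(negbTE xc) ?(negbTE xl1) ?(negbTE xl2) ?(negbTE cl1) ?(negbTE cl2) //;
  rewrite ?[c == x]eq_sym ?[l1 == x]eq_sym ?[l2 == x]eq_sym ?[l1 == c]eq_sym ?[l2 == c]eq_sym;
  by rewrite ?(negbTE xc) ?(negbTE xl1) ?(negbTE xl2) ?(negbTE cl1) ?(negbTE cl2).
Qed.

Lemma bwin_M c l1 l2 c' l1' l2' :
  sr_edge e c l1 -> sr_edge e c l2 -> l1 != l2 ->
  sr_edge e c' l1' -> sr_edge e c' l2' -> l1' != l2' ->
  (forall x, x \in [:: c; l1; l2] -> x \in [:: c'; l1'; l2'] -> False) ->
  forall n, ~ mwin e n set0 set0 true.
Proof.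
move=> e1 e2 l12 e1' e2' l12' D [|n] /=.
  by apply: noncover e1 _ _; rewrite in_set0.
case: ifP => full; first by apply: noncover e1 _ _; rewrite in_set0.
case=> x _; rewrite setU0.
case: (boolP (x \in [:: c; l1; l2])) => xin.
  have xn : x \notin [:: c'; l1'; l2'] by apply/negP => /(D x xin).
  exact: bwin_after e1' e2' l12' xn n.
exact: bwin_after e1 e2 l12 xin n.
Qed.

Lemma bwin_B c l1 l2 : sr_edge e c l1 -> sr_edge e c l2 -> l1 != l2 ->
  forall n, ~ mwin e n set0 set0 false.
Proof.
move=> e1 e2 l12 [|n] /=.
  by apply: noncover e1 _ _; rewrite in_set0.
case: ifP => full; first by apply: noncover e1 _ _; rewrite in_set0.
move=> W.
have cf : c \notin set0 :|: set0 by rewrite setU0 in_set0.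
have cl1 := sr_neq e1; have cl2 := sr_neq e2.
move: (W c cf); apply: (bwin_cherry e1 e2 l12);
  rewrite !inE ?eqxx //= ?orbF ?negb_or;
  rewrite ?[l1 == c]eq_sym ?[l2 == c]eq_sym;
  by rewrite ?(negbTE cl1) ?(negbTE cl2).
Qed.

(* Maker's pairing strategy *)
Hypothesis uniqp : forall u v w, sr_edge e u v -> sr_edge e u w -> v = w.

Definition good (M B : {set T}) := forall u v, sr_edge e u v ->
  [|| u \in M, v \in M | (u \notin M :|: B) && (v \notin M :|: B)].

Lemma full_cover (M B : {set T}) : good M B -> [set: T] \subset M :|: B -> maker_terminal e M.
Proof.
move=> G full; apply: Hcov => u v uv.
case/or3P: (G u v uv) => [->|->|/andP[uf _]]; [by left|by right|].
by move: uf; rewrite (subsetP full u (in_setT u)).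
Qed.

Lemma card_free (A : {set T}) x : x \notin A -> #|A| < #|T|.
Proof.
move=> xA; have := max_card (mem (x |: A)).
by rewrite cardsU1 xA.
Qed.

Lemma full_card (A : {set T}) : #|T| <= #|A| -> [set: T] \subset A.
Proof.
move=> C; apply/subsetP => x _; apply/negPn/negP => /card_free; lia.
Qed.

Lemma mwin_pair : forall n (M B : {set T}), good M B -> #|T| <= n + #|M :|: B| ->
  mwin e n M B true /\ mwin e n M B false.
Proof.
elim/ltn_ind => n IH M B G C.
case: n IH C => [|n] IH C /=.
  rewrite add0n in C; have W := full_cover G (full_card C); by split.
case: ifP => full; first by have W := full_cover G full; split.
have [x _ xf] := subsetPn (negbT full).
split.
  exists x => //; apply: (proj2 (IH n (ltnSn n) (x |: M) B _ _)).
    move=> u v uv; rewrite -setUA !in_setU1.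
    case/or3P: (G u v uv) => [->|->|/andP[uf vf]]; rewrite ?orbT //.
    rewrite (negbTE uf) (negbTE vf).
    move: uf vf; rewrite !in_setU !negb_or => /andP[/negbTE -> _] /andP[/negbTE -> _].
    by case: (u == x); case: (v == x).
  by rewrite -setUA cardsU1 xf; lia.
move=> v vf.
set D := M :|: (v |: B).
have ED : D = v |: (M :|: B) by rewrite /D setUCA.
have GD : forall u w, sr_edge e u w -> u \notin M -> w \notin M ->
   u \notin D -> w \notin D -> False -> False by [].
have cov : [set: T] \subset D -> maker_terminal e M.
  move=> fullD; apply: Hcov => u w uw.
  case/or3P: (G u w uw) => [->|->|/andP[uf wf]]; [by left|by right|].
  have := subsetP fullD u (in_setT u); have := subsetP fullD w (in_setT w).
  rewrite ED !in_setU1 (negbTE uf) (negbTE wf) !orbF => /eqP wv /eqP uv'.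
  by move: (sr_neq uw); rewrite wv uv' eqxx.
have CD : #|D| = (#|M :|: B|).+1 by rewrite ED cardsU1 vf.
case: n IH C => [|n] IH C /=.
  by apply: cov; apply: full_card; lia.
case: ifP => fullD; first exact: cov.
have [x' _ x'f] := subsetPn (negbT fullD).
pose y := if [pick p | sr_edge e v p && (p \notin D)] is Some p then p else x'.
have yf : y \notin D.
  rewrite /y; case: pickP => [p /andP[_ ->] //|_]; exact: x'f.
exists y => //.
apply: (proj2 (IH n (ltnW (ltnSn n.+1)) (y |: M) (v |: B) _ _)); last first.
  by rewrite -setUA -/D cardsU1 yf CD; lia.
move=> u w uw; rewrite -setUA -/D !in_setU1.
case/or3P: (G u w uw) => [->|->|/andP[uf wf]]; rewrite ?orbT //.
have key : forall a b, sr_edge e a b -> a = v -> b \notin M :|: B -> y = b.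
  move=> a b ab av bf.
  have bD : b \notin D.
    rewrite ED in_setU1 negb_or bf andbT; apply/negP => /eqP bv.
    by move: (sr_neq ab); rewrite av bv eqxx.
  rewrite /y; case: pickP => [p /andP[vp _]|/(_ b)].
    by apply: uniqp vp _; rewrite -av.
  by rewrite -av ab bD.
case: (eqVneq u v) => [uv|uv].
  by rewrite (key u w uw uv wf) eqxx orbT.
case: (eqVneq w v) => [wv|wv].
  by rewrite sr_sym in uw; rewrite (key w u uw wv uf) eqxx.
have uD : u \notin D by rewrite ED in_setU1 negb_or uv.
have wD : w \notin D by rewrite ED in_setU1 negb_or wv.
rewrite (negbTE uD) (negbTE wD).
move: uf wf; rewrite !in_setU !negb_or => /andP[/negbTE -> _] /andP[/negbTE -> _].
by case: (u == y); case: (w == y).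
Qed.

End Game.

Section Graph.
Variable T : finType.
Variable e : rel T.
Hypothesis esimple : simple_graph e.
Hypothesis econn : connected_graph e.
Hypothesis ecard : 1 < #|T|.

Lemma g_sym : symmetric e. Proof. by case: esimple. Qed.
Lemma eirr : irreflexive e. Proof. by case: esimple. Qed.

Lemma exists_neq (x : T) : exists y, y != x.
Proof.
case/card_gt1P: ecard => a [b [_ _ ab]].
case: (eqVneq a x) => [E|]; last by exists a.
by exists b; rewrite -E eq_sym.
Qed.

Lemma neighbor (x : T) : exists y, e x y.
Proof.
have [y yx] := exists_neq x.
have /connectP [p P L] := econn x y.
case: p P L => [|z p] /=; first by move=> _ E; rewrite E eqxx in yx.
by case/andP => exz _ _; exists z.
Qed.

Lemma noself_md (x : T) : ~~ max_distant e x x.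
Proof.
have [y xy] := neighbor x.
apply/negP => /forallP /(_ y); rewrite xy /= dist0 // leqn0 => /eqP.
move/(dist_eq0 econn) => E; by rewrite E eirr in xy.
Qed.

Lemma diametral : exists u v, sr_edge e u v.
Proof.
have [x0 _] := exists_neq (enum_val (Ordinal (ltnW ecard))).
pose F := fun p : T * T => dist e p.1 p.2.
case: (@arg_maxnP _ (x0, x0) xpredT F isT) => [[u v]] _ Mx.
exists u, v.
have uv : u != v.
  case/card_gt1P: ecard => a [b [_ _ ab]].
  have := Mx (a, b) isT; rewrite /F /=.
  case: (eqVneq u v) => // ->; rewrite dist0 // leqn0 => /eqP /(dist_eq0 econn) E.
  by rewrite E eqxx in ab.
rewrite /sr_edge uv /mmd /max_distant /=; apply/andP; split; apply/forallP => w; apply/implyP => _.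
  exact: (Mx (w, v)).
by rewrite (dist_sym g_sym econn v u); exact: (Mx (w, u)).
Qed.

Lemma sr_mmd u v : sr_edge e u v = mmd e u v.
Proof.
rewrite /sr_edge; case: (eqVneq u v) => [->|] //=.
by rewrite /mmd (negbTE (noself_md v)).
Qed.

End Graph.

Section Iso.
Variable T : finType.
Variable e : rel T.
Variable x0 : T.
Hypothesis uniqp : forall u v w, sr_edge e u v -> sr_edge e u w -> v = w.

Let P := sr_vertices e.
Definition pt (x : T) := odflt x [pick y | sr_edge e x y].

Lemma inP x : (x \in P) = [exists y, sr_edge e x y].
Proof. by rewrite inE. Qed.

Lemma pt_edge x : x \in P -> sr_edge e x (pt x).
Proof.
rewrite inP => /existsP [y xy]; rewrite /pt; case: pickP => [z //|/(_ y)].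
by rewrite xy.
Qed.

Lemma edgeP x y : sr_edge e x y -> x \in P.
Proof. by move=> xy; rewrite inP; apply/existsP; exists y. Qed.

Lemma pt_P x : x \in P -> pt x \in P.
Proof. by move/pt_edge; rewrite sr_sym; apply: edgeP. Qed.

Lemma pt_inv x : x \in P -> pt (pt x) = x.
Proof.
move=> xP; have E := pt_edge xP.
apply: (uniqp (pt_edge (pt_P xP))); by rewrite sr_sym.
Qed.

Lemma pt_neq x : x \in P -> pt x != x.
Proof. by move/pt_edge/sr_neq; rewrite eq_sym. Qed.

Lemma edge_pt x y : sr_edge e x y -> y = pt x.
Proof. by move=> xy; apply: (uniqp xy); apply: pt_edge; apply: edgeP xy. Qed.

Definition R := [set x in P | (enum_rank x < enum_rank (pt x))%N].

Lemma inR x : (x \in R) = (x \in P) && (enum_rank x < enum_rank (pt x))%N.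
Proof. by rewrite /R in_set. Qed.

Lemma R_pt x : x \in R -> pt x \notin R.
Proof.
rewrite !inR => /andP[xP lt]; rewrite (pt_inv xP) negb_and; apply/orP; right.
by rewrite -leqNgt ltnW.
Qed.

Lemma nR_pt x : x \in P -> x \notin R -> pt x \in R.
Proof.
move=> xP; rewrite !inR xP /= -leqNgt => le.
rewrite pt_P // pt_inv //= ltn_neqAle le andbT.
apply/negP => /eqP /val_inj /enum_rank_inj E.
by move: (pt_neq xP); rewrite E eqxx.
Qed.

Lemma R_P x : x \in R -> x \in P.
Proof. by rewrite inR => /andP[]. Qed.

Definition rep x := if x \in R then x else pt x.

Lemma rep_R x : x \in P -> rep x \in R.
Proof. by move=> xP; rewrite /rep; case: ifP => // /negbT; apply: nR_pt. Qed.

Lemma idx_lt (x : sr_vtype e) : index (rep (val x)) (enum R) < #|R|.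
Proof. by rewrite cardE index_mem mem_enum rep_R //; case: x. Qed.

Definition fiso (x : sr_vtype e) : 'I_#|R| * bool := (Ordinal (idx_lt x), val x \notin R).

Definition graw (i : 'I_#|R|) (b : bool) :=
  let r := nth x0 (enum R) i in if b then pt r else r.

Lemma nth_R (i : 'I_#|R|) : nth x0 (enum R) i \in R.
Proof. by rewrite -mem_enum mem_nth // -cardE. Qed.

Lemma graw_P i b : graw i b \in P.
Proof. by rewrite /graw; have := R_P (nth_R i); case: b => // H; exact: pt_P. Qed.

Definition giso (p : 'I_#|R| * bool) : sr_vtype e := exist _ (graw p.1 p.2) (graw_P p.1 p.2).

Lemma fisoK : cancel fiso giso.
Proof.
case=> x xP; apply: val_inj; rewrite /giso /fiso /graw /=.
rewrite nth_index ?mem_enum ?rep_R //.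
by rewrite /rep; case: (boolP (x \in R)) => /= _ //; rewrite pt_inv.
Qed.

Lemma gisoK : cancel giso fiso.
Proof.
case=> i b; rewrite /giso /fiso /=.
have rR := nth_R i.
have Hrep : rep (graw i b) = nth x0 (enum R) i.
  rewrite /rep /graw; case: (b).
    by rewrite (negbTE (R_pt rR)) pt_inv // R_P.
  by rewrite rR.
have Hb : (graw i b \notin R) = b.
  by rewrite /graw; case: (b); rewrite ?R_pt ?rR.
congr (_, _); last exact: Hb.
apply: val_inj => /=; rewrite Hrep index_uniq ?enum_uniq //.
by rewrite -cardE.
Qed.

Lemma rep_edge x y : x \in P -> y \in P ->
  sr_edge e x y = (rep x == rep y) && ((x \in R) != (y \in R)).
Proof.
move=> xP yP; apply/idP/idP.
  move/edge_pt => ->; rewrite /rep.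
  case: (boolP (x \in R)) => xR.
    by rewrite (negbTE (R_pt xR)) pt_inv // eqxx.
  by rewrite (nR_pt xP xR) eqxx.
rewrite /rep; case: (boolP (x \in R)) => xR; case: (boolP (y \in R)) => yR;
  rewrite ?andbF ?andbT //.
  by move/eqP ->; rewrite sr_sym; exact: pt_edge.
by move/eqP <-; exact: pt_edge.
Qed.

Lemma iso_of_uniq : (exists x, x \in P) -> exists a, 0 < a /\ sr_iso_aK2 e a.
Proof.
case=> x xP; exists #|R|; split.
  by apply/card_gt0P; exists (rep x); exact: rep_R.
exists fiso; split; first by exists giso; [exact: fisoK | exact: gisoK].
case=> u uP [v vP] /=; rewrite rep_edge // /aK2_edge /fiso /=.
congr (_ && _).
  apply/eqP/eqP => [E|/(congr1 val) /= E]; first by apply: val_inj => /=; rewrite E.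
  by move: E => /(congr1 (nth x0 (enum R))); rewrite !nth_index ?mem_enum ?rep_R.
by case: (u \in R); case: (v \in R).
Qed.

End Iso.

Lemma uniq_of_iso (T : finType) (e : rel T) a : sr_iso_aK2 e a ->
  forall u v w, sr_edge e u v -> sr_edge e u w -> v = w.
Proof.
case=> f [fb fE] u v w uv uw.
have uP : u \in sr_vertices e by apply: edgeP uv.
have vP : v \in sr_vertices e by apply: (@edgeP _ _ v u); rewrite sr_sym.
have wP : w \in sr_vertices e by apply: (@edgeP _ _ w u); rewrite sr_sym.
pose u' : sr_vtype e := exist _ u uP.
pose v' : sr_vtype e := exist _ v vP.
pose w' : sr_vtype e := exist _ w wP.
have := fE u' v'; have := fE u' w'; rewrite /= uv uw /aK2_edge.
case: (f u') => i b; case Ev: (f v') => [j c]; case Ew: (f w') => [k d] /=.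
move=> /esym /andP[/eqP ik bd] /esym /andP[/eqP ij bc].
have E : f v' = f w'.
  by rewrite Ev Ew -ik -ij; congr pair; by move: bc bd; case: (b); case: (c); case: (d).
by have := congr1 val (bij_inj fb E).
Qed.

Definition upart (T : finType) (e : rel T) :=
  [forall u, forall v, forall w, sr_edge e u v ==> sr_edge e u w ==> (v == w)].

Lemma upart_uniq (T : finType) (e : rel T) : upart e ->
  forall u v w, sr_edge e u v -> sr_edge e u w -> v = w.
Proof.
move=> H u v w uv uw.
by have := forallP (forallP (forallP H u) v) w; rewrite uv uw /= => /eqP.
Qed.

Lemma uniq_upart (T : finType) (e : rel T) :
  (forall u v w, sr_edge e u v -> sr_edge e u w -> v = w) -> upart e.
Proof.
move=> H; apply/forallP => u; apply/forallP => v; apply/forallP => w.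
by apply/implyP => uv; apply/implyP => uw; apply/eqP; exact: (H u v w uv uw).
Qed.

Lemma cherry_of (T : finType) (e : rel T) : ~~ upart e ->
  exists c l1 l2, [/\ sr_edge e c l1, sr_edge e c l2 & l1 != l2].
Proof.
move/forallPn => [u /forallPn [v /forallPn [w]]].
rewrite !negb_imply => /andP[uv /andP[uw vw]]; by exists u, v, w.
Qed.

Lemma arith3 G H' dac Hc n : G + Hc <= n -> H' <= dac + Hc -> dac <= 1 -> G + H' <= n.+1.
Proof. lia. Qed.

Section Prod.
Variables (T1 T2 : finType) (g : rel T1) (h : rel T2).
Hypotheses (gs : simple_graph g) (hs : simple_graph h).
Hypotheses (gc : connected_graph g) (hc : connected_graph h).
Hypotheses (c1 : 1 < #|T1|) (c2 : 1 < #|T2|).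

Local Notation X := (cart_prod g h).

Lemma Xsym : symmetric X.
Proof.
move=> x y; rewrite /cart_prod (eq_sym x.1) (eq_sym x.2).
by rewrite (g_sym hs) (g_sym gs).
Qed.

Lemma liftG (b : T2) a p : path g a p -> path X (a, b) [seq (x, b) | x <- p].
Proof.
elim: p a => //= x p IH a /andP[ax P]; rewrite IH // andbT.
by rewrite /cart_prod /= eqxx ax orbT.
Qed.

Lemma liftH (a : T1) b q : path h b q -> path X (a, b) [seq (a, y) | y <- q].
Proof.
elim: q b => //= y q IH b /andP[ax P]; rewrite IH // andbT.
by rewrite /cart_prod /= eqxx ax.
Qed.

Lemma Xpath u v : exists p, [/\ path X u p, last u p = v &
  size p = dist g u.1 v.1 + dist h u.2 v.2].
Proof.
case: u v => [u1 u2] [v1 v2] /=.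
have [p [P1 P2 P3]] := dist_geo gc u1 v1.
have [q [Q1 Q2 Q3]] := dist_geo hc u2 v2.
exists ([seq (x, u2) | x <- p] ++ [seq (v1, y) | y <- q]); split.
- rewrite cat_path liftG //=.
  rewrite (last_map (fun x => (x, u2)) p u1) P2; exact: liftH.
- rewrite last_cat (last_map (fun x => (x, u2)) p u1) P2.
  by rewrite (last_map (fun y => (v1, y)) q u2) Q2.
- by rewrite size_cat !size_map P3 Q3.
Qed.

Lemma Xconn : connected_graph X.
Proof.
move=> u v; have [p [P1 P2 _]] := Xpath u v.
by apply/connectP; exists p.
Qed.

Lemma Xge a p : path X a p ->
  dist g a.1 (last a p).1 + dist h a.2 (last a p).2 <= size p.
Proof.
elim: p a => [|c p IH] a /=.
  by rewrite !dist0.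
case/andP => ac /IH IHp; rewrite /cart_prod in ac.
have tg := dist_tri gc a.1 c.1 (last c p).1.
have th := dist_tri hc a.2 c.2 (last c p).2.
case/orP: ac => /andP[/eqP E eac].
  rewrite E; exact: (arith3 IHp th (dist_adj hc eac)).
rewrite E addnC; apply: (arith3 _ tg (dist_adj gc eac)).
by rewrite addnC.
Qed.

Lemma distX u v : dist X u v = dist g u.1 v.1 + dist h u.2 v.2.
Proof.
apply/eqP; rewrite eqn_leq; apply/andP; split.
  have [p [P1 P2 P3]] := Xpath u v.
  by rewrite -P3 -{1}P2; apply: dist_path Xconn _ _ P1.
have [p [P1 P2 P3]] := dist_geo Xconn u v.
by rewrite -P3 -P2; apply: Xge.
Qed.

Lemma mdX u v : max_distant X u v = max_distant g u.1 v.1 && max_distant h u.2 v.2.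
Proof.
case: u v => [u1 u2] [v1 v2] /=; rewrite /max_distant.
apply/idP/idP.
  move/forallP => H; apply/andP; split; apply/forallP => w; apply/implyP => uw.
    have := implyP (H (w, u2)); rewrite /cart_prod /= eqxx uw orbT !distX /=.
    by rewrite leq_add2r; apply.
  have := implyP (H (u1, w)); rewrite /cart_prod /= eqxx uw /= !distX /=.
  by rewrite leq_add2l; apply.
case/andP => /forallP Hg /forallP Hh; apply/forallP => -[w1 w2]; apply/implyP.
rewrite /cart_prod /= => /orP[/andP[/eqP <- uw]|/andP[/eqP <- uw]]; rewrite !distX /=.
  by rewrite leq_add2l; apply: (implyP (Hh w2)).
by rewrite leq_add2r; apply: (implyP (Hg w1)).
Qed.

Lemma srX u v : sr_edge X u v = sr_edge g u.1 v.1 && sr_edge h u.2 v.2.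
Proof.
rewrite (sr_mmd gs gc c1) (sr_mmd hs hc c2).
have mX : forall u v, mmd X u v = mmd g u.1 v.1 && mmd h u.2 v.2.
  by move=> x y; rewrite /mmd !mdX andbACA.
rewrite -mX /sr_edge; case: (eqVneq u v) => [->|] //=.
by rewrite mX /mmd (negbTE (noself_md gs gc c1 v.1)).
Qed.

Lemma HresX (M : {set T1 * T2}) : maker_terminal X M ->
  forall u v, sr_edge X u v -> u \in M \/ v \in M.
Proof.
case=> S [sub SR] u v uv.
case: (sr_res_cover Xsym Xconn SR uv) => H; [left|right]; exact: (subsetP sub _ H).
Qed.

Lemma HcovX (M : {set T1 * T2}) :
  (forall u v, sr_edge X u v -> u \in M \/ v \in M) -> maker_terminal X M.
Proof. move=> C; exists M; split => //. exact: (sr_cover_res Xsym Xconn C). Qed.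

Lemma key_outcome :
  if upart g && upart h then O_SR_is X OutM else O_SR_is X OutB.
Proof.
case: ifP => U.
  case/andP: U => /upart_uniq ug /upart_uniq uh.
  have uX : forall u v w, sr_edge X u v -> sr_edge X u w -> v = w.
    move=> u v w; rewrite !srX => /andP[g1 h1] /andP[g2 h2].
    case: v w g1 h1 g2 h2 => [v1 v2] [w1 w2] /= g1 h1 g2 h2.
    by rewrite (ug _ _ _ g1 g2) (uh _ _ _ h1 h2).
  have G0 : good X set0 set0.
    by move=> u v _; rewrite setU0 !in_set0.
  have [W1 W2] := mwin_pair HcovX uX G0 (leq_addr _ _).
  by split.
have [Cm Cb] : (exists c l1 l2 c' l1' l2', [/\ sr_edge X c l1, sr_edge X c l2 & l1 != l2] /\
    [/\ sr_edge X c' l1', sr_edge X c' l2' & l1' != l2'] /\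
    (forall x, x \in [:: c; l1; l2] -> x \in [:: c'; l1'; l2'] -> False)) /\ True.
  split => //.
  case: (boolP (upart g)) => ug.
    have uh : ~~ upart h by move: U; rewrite ug => /negbT.
    have [h0 [h1 [h2 [e1 e2 h12]]]] := cherry_of uh.
    have [g1 [g2 e12]] := diametral gs gc c1.
    have g12 := sr_neq e12; have h01 := sr_neq e1; have h02 := sr_neq e2.
    exists (g1, h0), (g2, h1), (g2, h2), (g2, h0), (g1, h1), (g1, h2); split; [split|split; [split|]].
    - by rewrite srX /= e12 e1.
    - by rewrite srX /= e12 e2.
    - by rewrite xpair_eqE negb_and h12 orbT.
    - by rewrite srX /= sr_sym e12 e1.
    - by rewrite srX /= sr_sym e12 e2.
    - by rewrite xpair_eqE negb_and h12 orbT.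
    have Hne : [&& g1 != g2, h0 != h1, h0 != h2 & h1 != h2] by rewrite g12 h01 h02 h12.
    move=> [x1 x2]; rewrite !inE !xpair_eqE.
    case/or3P => /andP[/eqP E1 /eqP E2]; case/or3P => /andP[/eqP E3 /eqP E4]; subst;
      by move: Hne; rewrite ?eqxx /= ?andbF.
  have [g0 [g1 [g2 [e1 e2 g12]]]] := cherry_of ug.
  have [h1 [h2 e12]] := diametral hs hc c2.
  have h12 := sr_neq e12; have g01 := sr_neq e1; have g02 := sr_neq e2.
  exists (g0, h1), (g1, h2), (g2, h2), (g0, h2), (g1, h1), (g2, h1); split; [split|split; [split|]].
  - by rewrite srX /= e12 e1.
  - by rewrite srX /= e12 e2.
  - by rewrite xpair_eqE negb_and g12.
  - by rewrite srX /= e1 sr_sym e12.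
  - by rewrite srX /= e2 sr_sym e12.
  - by rewrite xpair_eqE negb_and g12.
  have Hne : [&& g0 != g1, g0 != g2, g1 != g2 & h1 != h2] by rewrite g12 g01 g02 h12.
  move=> [x1 x2]; rewrite !inE !xpair_eqE.
  case/or3P => /andP[/eqP E1 /eqP E2]; case/or3P => /andP[/eqP E3 /eqP E4]; subst;
    by move: Hne; rewrite ?eqxx /= ?andbF.
case: Cm => c [l1 [l2 [c' [l1' [l2' [[e1 e2 l12] [[e1' e2' l12'] D]]]]]]].
split.
  exact: (bwin_M HresX e1 e2 l12 e1' e2' l12' D).
exact: (bwin_B HresX e1 e2 l12).
Qed.

End Prod.

Theorem mainTheorem14 (T1 T2 : finType) (g : rel T1) (h : rel T2) :
  simple_graph g -> simple_graph h ->
  connected_graph g -> connected_graph h ->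
  1 < #|T1| -> 1 < #|T2| ->
  (O_SR_is (cart_prod g h) OutM \/ O_SR_is (cart_prod g h) OutB) /\
  (O_SR_is (cart_prod g h) OutM <->
     exists a b : nat, [/\ 0 < a, 0 < b, sr_iso_aK2 g a & sr_iso_aK2 h b]).
Proof.
move=> gs hs gc hc c1 c2.
have K := key_outcome gs hs gc hc c1 c2.
have isoE : (exists a b, [/\ 0 < a, 0 < b, sr_iso_aK2 g a & sr_iso_aK2 h b]) <->
    upart g && upart h.
  split.
    case=> a [b [_ _ ia ib]]; apply/andP; split; apply: uniq_upart.
      exact: (uniq_of_iso ia).
    exact: (uniq_of_iso ib).
  case/andP => /upart_uniq ug /upart_uniq uh.
  have [u [v uv]] := diametral gs gc c1.
  have [u' [v' uv']] := diametral hs hc c2.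
  have [a [a0 ia]] := iso_of_uniq u ug (ex_intro _ u (edgeP uv)).
  have [b [b0 ib]] := iso_of_uniq u' uh (ex_intro _ u' (edgeP uv')).
  by exists a, b; split.
split.
  by move: K; case: ifP => _ K; [left|right].
split.
  move=> HM; apply/isoE; move: K; case: ifP => // _ [nM _].
  by case: HM.
by move/isoE => U; move: K; rewrite U.
Qed.
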